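(* For $p\in(0,1]$ let $\varphi(p)=\big(1-(3-2\sqrt2)p\big)^{\frac2p}\big(1-\frac p2\big)^{\frac2p-1}$. Then $\varphi$ is monotonically increasing on $(0,1]$. *)

(* Defs.v *)
From Stdlib Require Import Reals.
Open Scope R_scope.

(* phi(p) = (1 - (3 - 2 sqrt 2) p)^(2/p) * (1 - p/2)^(2/p - 1),
   both bases are positive for p in (0,1]. *)
Definition phi (p : R) : R :=
  Rpower (1 - (3 - 2 * sqrt 2) * p) (2 / p) * Rpower (1 - p / 2) (2 / p - 1).

(* Main.v *)
Require Import Defs.
From Stdlib Require Import Reals Lra.
From Coquelicot Require Import Coquelicot.
Open Scope R_scope.

Lemma c_bounds : 0 < 3 - 2 * sqrt 2 < 1/5.
Proof.
  assert (H1 : 1.41 < sqrt 2).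
  { rewrite <- (sqrt_square 1.41) by lra. apply sqrt_lt_1; nra. }
  assert (H2 : sqrt 2 < 1.42).
  { rewrite <- (sqrt_square 1.42) by lra. apply sqrt_lt_1; nra. }
  lra.
Qed.

Definition gg (c p : R) := - ln (1 - c*p) - ln (1 - p/2) - c*p/(1-c*p) - p/2.
Definition LL (c p : R) := 2/p * ln (1 - c*p) + (2/p - 1) * ln (1 - p/2).

Lemma gg_der c0 p : 0 < c0 < 1/5 -> 0 <= p <= 1 ->
  is_derive (gg c0) p (- c0^2*p/(1-c0*p)^2 + p/(2*(2-p))).
Proof.
  intros Hc Hp. unfold gg. auto_derive.
  - repeat split; try lra; nra.
  - field; split; try lra; nra.
Qed.

Lemma LL_der c0 p : 0 < c0 < 1/5 -> 0 < p <= 1 ->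
  is_derive (LL c0) p (2/p^2 * gg c0 p).
Proof.
  intros Hc Hp. unfold LL, gg. auto_derive.
  - repeat split; try lra; nra.
  - unfold Rminus, Rdiv. field; split; try lra; nra.
Qed.

Lemma gg_pos c0 p : 0 < c0 < 1/5 -> 0 < p <= 1 -> 0 < gg c0 p.
Proof.
  intros Hc Hp.
  destruct (MVT_cor2 (gg c0) (fun p => - c0^2*p/(1-c0*p)^2 + p/(2*(2-p))) 0 p)
    as [d [Hd1 Hd2]]; [lra| |].
  { intros x Hx. apply is_derive_Reals. apply gg_der; lra. }
  assert (H0 : gg c0 0 = 0).
  { unfold gg. replace (1 - c0*0) with 1 by ring. replace (1 - 0/2) with 1 by field.
    rewrite ln_1. field. }
  rewrite H0 in Hd1.
  assert (Hpos : 0 < - c0^2*d/(1-c0*d)^2 + d/(2*(2-d))).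
  { assert (0 < 1 - c0*d) by nra.
    replace (- c0^2*d/(1-c0*d)^2 + d/(2*(2-d))) with
      (d*((1-c0*d)^2 - 2*c0^2*(2-d)) / (2*(2-d)*(1-c0*d)^2)) by (field; lra).
    apply Rdiv_lt_0_compat.
    - apply Rmult_lt_0_compat; [lra|]. nra.
    - apply Rmult_lt_0_compat; [lra|]. nra. }
  nra.
Qed.

Lemma LL_incr c0 p q : 0 < c0 < 1/5 -> 0 < p -> p < q -> q <= 1 -> LL c0 p < LL c0 q.
Proof.
  intros Hc Hp Hpq Hq.
  destruct (MVT_cor2 (LL c0) (fun p => 2/p^2 * gg c0 p) p q)
    as [d [Hd1 Hd2]]; [lra| |].
  { intros x Hx. apply is_derive_Reals. apply LL_der; lra. }
  assert (0 < 2/d^2 * gg c0 d).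
  { apply Rmult_lt_0_compat. apply Rdiv_lt_0_compat; [lra|]. nra.
    apply gg_pos; lra. }
  nra.
Qed.

Theorem lemma11 : forall p q : R, 0 < p -> p < q -> q <= 1 -> phi p < phi q.
Proof.
  intros p q Hp Hpq Hq.
  assert (E : forall x, phi x = exp (LL (3 - 2 * sqrt 2) x)).
  { intros x. unfold phi, Rpower, LL. rewrite exp_plus. reflexivity. }
  rewrite !E. apply exp_increasing. apply LL_incr; try lra. apply c_bounds.
Qed.
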